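(* For every $n\in\mathbb N$, Thompson's group $F$ acts transitively, via $f\cdot x=\iota(f)(x)$, on the set \[ \Sigma_n=\{(x_1,\ldots,x_n)\in(\{0,1\}^* )^n : x_1 <_{\rm lex} x_2 <_{\rm lex}\cdots<_{\rm lex} x_n\}. \]
   Context: Let $\{0,1\}^*$ be the finite words over $\{0,1\}$ (empty word $\varepsilon$). Order $\{0,1\}^*$ by $\le_{\rm lex}$: for words $x,y$ append the infinite string $\tfrac12\tfrac12\cdots$ to each and compare the results lexicographically with $0<\tfrac12<1$ (so e.g. $00<_{\rm lex}0<_{\rm lex}01$). A finite rooted binary subtree is a finite prefix-closed set of words containing $\varepsilon$ in which each element has both or neither of its children $x0,x1$; its leaves are the elements with no children and its nodes the others. Thompson's group $F$ is the group of homeomorphisms $f$ of $\{0,1\}^{\mathbb N}$ for which there are finite rooted binary subtrees $L,R$ with leaves $\ell_1<_{\rm lex}\cdots<_{\rm lex}\ell_k$ and $r_1<_{\rm lex}\cdots<_{\rm lex}r_k$ such that $f(\ell_i\omega)=r_i\omega$. For such $f$, let $\iota(f)$ be the bijection of $\{0,1\}^*$ sending the $i$-th node of $L$ (in $\le_{\rm lex}$ order) to the $i$-th node of $R$, and sending $\ell_i s\mapsto r_i s$ for all words $s$; this is independent of the choice of $(L,R)$ and defines an action of $F$ on $\{0,1\}^*$. *)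

(* Defs.v *)
From mathcomp Require Import all_boot.
Set Implicit Arguments. Unset Strict Implicit. Unset Printing Implicit Defensive.

(* Finite words over {0,1}: false = 0, true = 1. *)
Definition word := seq bool.

(* Strict lexicographic order <_lex: compare x.(1/2)(1/2)... with
   y.(1/2)(1/2)... lexicographically, where 0 < 1/2 < 1. *)
Fixpoint lexlt (x y : word) : bool :=
  match x, y with
  | [::], [::] => false
  | [::], b :: _ => b            (* 1/2 < b  iff b = 1 *)
  | a :: _, [::] => ~~ a         (* a < 1/2  iff a = 0 *)
  | a :: x', b :: y' => if a == b then lexlt x' y' else (~~ a) && b
  end.

Definition lexle (x y : word) : bool := (x == y) || lexlt x y.

Definition is_tree (T : seq word) : Prop :=
  [/\ uniq T,
      [::] \in T,
      (forall x p, x \in T -> prefix p x -> p \in T)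
    & (forall x, x \in T -> (rcons x false \in T) = (rcons x true \in T))].

Definition leaves (T : seq word) : seq word :=
  sort lexle [seq x <- T | rcons x false \notin T].
Definition nodes (T : seq word) : seq word :=
  sort lexle [seq x <- T | rcons x false \in T].

(* A pair (L,R) of finite rooted binary subtrees with the same number of
   leaves; such pairs are exactly the representatives of elements of F. *)
Definition thompson_pair (L R : seq word) : Prop :=
  [/\ is_tree L, is_tree R & size (leaves L) = size (leaves R)].

(* iota(f) for f represented by (L,R): i-th node of L |-> i-th node of R,
   and l_i s |-> r_i s. (Every word is either a node of L or extends a
   unique leaf of L; the last fallback branch is never used for trees.) *)
Definition iota (L R : seq word) (w : word) : word :=
  if w \in nodes L then nth [::] (nodes R) (index w (nodes L))
  else match [seq l <- leaves L | prefix l w] with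
       | l :: _ => nth [::] (leaves R) (index l (leaves L)) ++ drop (size l) w
       | [::] => w
       end.

Definition in_Sigma (n : nat) (x : n.-tuple word) : bool := sorted lexlt x.

Definition act_tuple (L R : seq word) (n : nat) (x : n.-tuple word) : seq word :=
  map (iota L R) x.

(* Main.v *)
Require Import Defs.
From mathcomp Require Import all_boot.
From mathcomp Require Import zify.
Set Implicit Arguments. Unset Strict Implicit. Unset Printing Implicit Defensive.

Lemma lexlt_irr x : lexlt x x = false.
Proof. by elim: x => //= a x ->; case: a. Qed.

Lemma lexlt_trans : transitive lexlt.
Proof.
move=> y x z; elim: x y z => [|a x IH] [|b y] [|c z] //=;
  (try case: a); (try case: b); (try case: c); rewrite //=; eauto.
Qed.

Lemma lexlt_asym x y : lexlt x y -> lexlt y x -> False.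
Proof. by move=> h1 h2; move: (lexlt_trans h1 h2); rewrite lexlt_irr. Qed.

Lemma lexlt_total x y : x != y -> lexlt x y || lexlt y x.
Proof.
elim: x y => [|a x IH] [|b y] //=; first by case: b.
  by case: a.
case: a; case: b => //= h; apply: IH; apply: contra h => /eqP ->; done.
Qed.

Lemma lexle_trans : transitive lexle.
Proof.
move=> y x z; rewrite /lexle => /orP[/eqP->//|h1] /orP[/eqP<-|h2].
  by rewrite h1 orbT.
by rewrite (lexlt_trans h1 h2) orbT.
Qed.

Lemma lexle_anti : antisymmetric lexle.
Proof.
move=> x y; rewrite /lexle => /andP[/orP[/eqP//|h1] /orP[/eqP//|h2]].
by case: (lexlt_asym h1 h2).
Qed.

Lemma lexle_total : total lexle.
Proof.
move=> x y; rewrite /lexle; case: (eqVneq x y) => [->|/lexlt_total]; first by [].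
by case/orP=> ->; rewrite ?orbT.
Qed.

Ltac mylia := unfold word in *; lia.

Inductive bt := Lf | Nd of bt & bt.

Fixpoint lvs (t : bt) : seq word :=
  match t with
  | Lf => [:: [::]]
  | Nd l r => map (cons false) (lvs l) ++ map (cons true) (lvs r)
  end.
Fixpoint nds (t : bt) : seq word :=
  match t with
  | Lf => [::]
  | Nd l r => map (cons false) (nds l) ++ [::] :: map (cons true) (nds r)
  end.
Definition nl t := size (lvs t).

Definition key := (nat * option word)%type.

Fixpoint pos (t : bt) (w : word) : key :=
  match t, w with
  | Lf, _ => (0, Some w)
  | Nd l r, [::] => ((nl l).-1, None)
  | Nd l r, false :: w' => pos l w'
  | Nd l r, true :: w' => let: (j, a) := pos r w' in (nl l + j, a)
  end.

Definition optlt (a b : option word) : bool :=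
  match a, b with
  | Some s, Some s' => lexlt s s'
  | Some _, None => true
  | _, _ => false
  end.
Definition keylt (k1 k2 : key) : bool :=
  (k1.1 < k2.1) || ((k1.1 == k2.1) && optlt k1.2 k2.2).
Definition valid t (k : key) : bool :=
  if k.2 is Some _ then k.1 < nl t else k.1.+1 < nl t.
Definition unpos t (k : key) : word :=
  match k.2 with
  | None => nth [::] (nds t) k.1
  | Some s => nth [::] (lvs t) k.1 ++ s
  end.

Lemma nl_gt0 t : 0 < nl t.
Proof. by elim: t => //= l IHl r _; rewrite /nl size_cat size_map addn_gt0 IHl. Qed.

Lemma size_nds t : size (nds t) = (nl t).-1.
Proof.
elim: t => //= l IHl r IHr; rewrite /nl /= !size_cat /= !size_map IHl IHr.
have := nl_gt0 l; have := nl_gt0 r; rewrite /nl. move=> h1 h2; rewrite -!subn1; mylia.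
Qed.

Lemma keylt_irr k : keylt k k = false.
Proof. by case: k => j [s|]; rewrite /keylt /= ltnn eqxx //= lexlt_irr. Qed.

Lemma keylt_asym k1 k2 : keylt k1 k2 -> keylt k2 k1 -> False.
Proof.
case: k1 k2 => j1 [s1|] [j2 [s2|]]; rewrite /keylt /=;
 case: (ltngtP j1 j2) => //= _ //; eauto using lexlt_asym.
Qed.

Lemma pos_valid t w : valid t (pos t w).
Proof.
elim: t w => [|l IHl r IHr] w /=; first by rewrite /valid /nl.
case: w => [|[] w] /=.
- rewrite /valid /= /nl /= size_cat !size_map.
  have := nl_gt0 l; have := nl_gt0 r; rewrite /nl; mylia.
- have := IHr w; case: (pos r w) => j [s|]; rewrite /valid /nl /= size_cat !size_map -/(nl l) -/(nl r); mylia.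
- have := IHl w; case: (pos l w) => j [s|]; rewrite /valid /nl /= size_cat !size_map -/(nl l) -/(nl r); mylia.
Qed.

Lemma pos_mono t w1 w2 : lexlt w1 w2 -> keylt (pos t w1) (pos t w2).
Proof.
elim: t w1 w2 => [|l IHl r IHr] w1 w2 /=; first by move=> h; rewrite /keylt /= h.
have gl := nl_gt0 l.
case: w1 => [|[] w1]; case: w2 => [|[] w2] //= h.
- case: (pos r w2) => j a; rewrite /keylt /=; apply/orP; left; mylia.
- have := IHr _ _ h; case: (pos r w1) => j1 a1; case: (pos r w2) => j2 a2.
  rewrite /keylt /= ltn_add2l eqn_add2l //.
- have := pos_valid l w1; case: (pos l w1) => j1 [s1|]; rewrite /valid /keylt /=.
    by move=> hv; case: (ltngtP j1 (nl l).-1) => //; mylia.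
  move=> hv; apply/orP; left; mylia.
- have := pos_valid l w1; case: (pos l w1) => j1 a1; case: (pos r w2) => j2 a2.
  rewrite /keylt /= => hv; apply/orP; left; case: a1 hv; rewrite /valid /=; mylia.
- exact: IHl.
Qed.

Lemma nth_lvs_Nd l r j : j < nl l + nl r -> nth [::] (lvs (Nd l r)) j =
  if j < nl l then false :: nth [::] (lvs l) j else true :: nth [::] (lvs r) (j - nl l).
Proof.
move=> hj; rewrite /= nth_cat size_map -/(nl l); case: ifP => h.
  by rewrite (nth_map [::]).
rewrite (nth_map [::]) //; rewrite /nl in h hj *; mylia.
Qed.

Lemma pos_unpos t k : valid t k -> pos t (unpos t k) = k.
Proof.
elim: t k => [|l IHl r IHr] [j [s|]]; rewrite /valid /unpos /=.
- by rewrite /nl /= ltnS leqn0 => /eqP ->.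
- by rewrite /nl.
- rewrite /nl /= size_cat !size_map -/(nl l) -/(nl r) => h.
  rewrite nth_lvs_Nd //; case: ifP => hj /=.
    by have := IHl (j, Some s); rewrite /valid /unpos /= => ->.
  have := IHr (j - nl l, Some s); rewrite /valid /unpos /= => ->; last by mylia.
  by congr pair; mylia.
- rewrite /nl /= size_cat !size_map -/(nl l) -/(nl r) => h.
  have sl := size_nds l.
  rewrite nth_cat size_map sl.
  case: ltnP => h1.
    rewrite (nth_map [::]) ?sl //=.
    by have := IHl (j, None); rewrite /valid /unpos /= => ->; last by have := nl_gt0 l; mylia.
  case: (eqVneq j (nl l).-1) => [->|hne]; first by rewrite subnn.
  have -> : j - (nl l).-1 = (j - nl l).+1 by have := nl_gt0 l; mylia.
  rewrite /= (nth_map [::]); last by rewrite size_nds; mylia.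
  have := IHr (j - nl l, None); rewrite /valid /unpos /= => ->; last by mylia.
  by congr pair; have := nl_gt0 l; mylia.
Qed.

Lemma unpos_pos t w : unpos t (pos t w) = w.
Proof.
elim: t w => [|l IHl r IHr] w; first by rewrite /unpos /=.
case: w => [|[] w] /=.
- rewrite /unpos /= nth_cat size_map size_nds ltnn subnn //.
- have := IHr w; have := pos_valid r w.
  case: (pos r w) => j [s|]; rewrite /unpos /valid /= => hv <-.
    by rewrite nth_lvs_Nd ?ltnNge ?leq_addr /= ?addKn // -ltnNge ltn_add2l.
  rewrite nth_cat size_map size_nds.
  have gl := nl_gt0 l.
  rewrite ifF; last by mylia.
  have -> : nl l + j - (nl l).-1 = j.+1 by mylia.
  by rewrite /= (nth_map [::]) // size_nds; mylia.
- have := IHl w; have := pos_valid l w.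
  case: (pos l w) => j [s|]; rewrite /unpos /valid /= => hv <-.
    by rewrite nth_lvs_Nd ?hv //; apply: leq_trans (leq_addr _ _).
  rewrite nth_cat size_map size_nds ifT; last by mylia.
  by rewrite (nth_map [::]) // size_nds; mylia.
Qed.

Lemma unpos_mono t k1 k2 : valid t k1 -> valid t k2 -> keylt k1 k2 ->
  lexlt (unpos t k1) (unpos t k2).
Proof.
move=> v1 v2 h.
case: (eqVneq (unpos t k1) (unpos t k2)) => [e|/lexlt_total/orP[//|h']].
  by move: h; rewrite -(pos_unpos v1) -(pos_unpos v2) e keylt_irr.
by case: (keylt_asym h); rewrite -(pos_unpos v1) -(pos_unpos v2); apply: pos_mono.
Qed.

Lemma sorted_lvs t : sorted lexlt (lvs t).
Proof.
rewrite sorted_pairwise; last exact: lexlt_trans.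
apply/(pairwiseP [::]) => i j hi hj hij.
have := @unpos_mono t (i, Some [::]) (j, Some [::]).
by rewrite /unpos /valid /= !cats0 /keylt /= hij; apply.
Qed.

Lemma sorted_nds t : sorted lexlt (nds t).
Proof.
rewrite sorted_pairwise; last exact: lexlt_trans.
apply/(pairwiseP [::]) => i j hi hj hij.
have := @unpos_mono t (i, None) (j, None).
move: hi hj; rewrite /unpos /valid /= /keylt /= hij !inE size_nds => hi hj; apply; mylia.
Qed.

Lemma uniq_lvs t : uniq (lvs t).
Proof. apply: sorted_uniq (sorted_lvs t); [exact: lexlt_trans| by move=> x; rewrite lexlt_irr]. Qed.
Lemma uniq_nds t : uniq (nds t).
Proof. apply: sorted_uniq (sorted_nds t); [exact: lexlt_trans| by move=> x; rewrite lexlt_irr]. Qed.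

Lemma filter_cons_map (b c : bool) (w : word) (s : seq word) :
  [seq x <- map (cons c) s | prefix x (b :: w)] =
  if b == c then map (cons c) [seq x <- s | prefix x w] else [::].
Proof.
elim: s => [|x s IH] /=; first by case: ifP.
rewrite IH; move: IH; case: b; case: c => //= _; by case: (prefix x w).
Qed.

Lemma filter_lvs t w j s : pos t w = (j, Some s) ->
  [seq l <- lvs t | prefix l w] = [:: nth [::] (lvs t) j].
Proof.
elim: t w j s => [|l IHl r IHr] w j s /=; first by case=> <- _; rewrite prefix0s.
case: w => [|[] w] //=; rewrite filter_cat !filter_cons_map /=.
- case e: (pos r w) => [j' a] [<- ea]; subst a.
  have hv := pos_valid r w; rewrite e /valid /= in hv.
  rewrite nth_lvs_Nd ?ltnNge ?leq_addr /= ?addKn ?(IHr _ _ _ e) //.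
  by rewrite -ltnNge ltn_add2l.
- move=> e; have hv := pos_valid l w; rewrite e /valid /= in hv.
  rewrite nth_lvs_Nd ?hv ?(IHl _ _ _ e) ?cats0 //; by apply: leq_trans (leq_addr _ _).
Qed.

Fixpoint inb (t : bt) (w : word) : bool :=
  match t, w with
  | Lf, w => w == [::]
  | Nd _ _, [::] => true
  | Nd l _, false :: w' => inb l w'
  | Nd _ r, true :: w' => inb r w'
  end.

Fixpoint elems (t : bt) : seq word :=
  match t with
  | Lf => [:: [::]]
  | Nd l r => [::] :: (map (cons false) (elems l) ++ map (cons true) (elems r))
  end.

Lemma mem_map_cons (b c : bool) (x : word) (s : seq word) :
  (b :: x \in map (cons c) s) = (b == c) && (x \in s).
Proof.
apply/mapP/andP => [[y ys [-> ->]]|[/eqP -> xs]]; last by exists x.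
by split.
Qed.

Lemma nil_map_cons (c : bool) (s : seq word) : ([::] \in map (cons c) s) = false.
Proof. by apply/mapP => -[]. Qed.

Lemma mem_elems t w : (w \in elems t) = inb t w.
Proof.
elim: t w => [|l IHl r IHr] w /=; first by rewrite inE.
case: w => [|b w]; first by rewrite inE eqxx.
rewrite inE /= mem_cat !mem_map_cons IHl IHr; by case: b; rewrite /= ?orbF.
Qed.

Lemma uniq_elems t : uniq (elems t).
Proof.
elim: t => //= l IHl r IHr.
rewrite mem_cat !nil_map_cons /= cat_uniq !map_inj_uniq //; try by move=> ? ? [].
rewrite IHl IHr /= andbT; apply/hasPn => x /mapP [y _ ->].
by rewrite mem_map_cons.
Qed.

Lemma inb_nil t : inb t [::].
Proof. by case: t. Qed.

Lemma inb_prefix t x p : inb t x -> prefix p x -> inb t p.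
Proof.
elim: t x p => [|l IHl r IHr] x p /=.
  by move=> /eqP ->; case: p.
case: p => [|c p]; first by [].
case: x => [|b x] //=.
by move=> hx /andP[/eqP -> hpx]; move: hx; case: b => /= hx; [apply: IHr hx hpx | apply: IHl hx hpx].
Qed.

Lemma inb_child t x : inb t (rcons x false) = inb t (rcons x true).
Proof.
elim: t x => [|l IHl r IHr] x /=; first by case: x.
case: x => [|[] x] /=; by rewrite ?inb_nil.
Qed.

Lemma is_tree_elems t : is_tree (elems t).
Proof.
split.
- exact: uniq_elems.
- by rewrite mem_elems inb_nil.
- by move=> x p; rewrite !mem_elems; apply: inb_prefix.
- by move=> x _; rewrite !mem_elems inb_child.
Qed.

Lemma mem_lvs t x : (x \in lvs t) = inb t x && ~~ inb t (rcons x false).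
Proof.
elim: t x => [|l IHl r IHr] x /=; first by rewrite inE; case: x.
case: x => [|b x]; first by rewrite mem_cat !nil_map_cons /= inb_nil.
rewrite mem_cat !mem_map_cons IHl IHr; by case: b; rewrite /= ?orbF.
Qed.

Lemma mem_nds t x : (x \in nds t) = inb t x && inb t (rcons x false).
Proof.
elim: t x => [|l IHl r IHr] x /=; first by rewrite in_nil; case: x.
case: x => [|b x]; first by rewrite mem_cat inE eqxx orbT /= inb_nil.
rewrite mem_cat inE /= !mem_map_cons IHl IHr; by case: b; rewrite /= ?orbF.
Qed.

Definition sub (b : bool) (T : seq word) : seq word :=
  [seq behead x | x <- T & ohead x == Some b].

Lemma mem_sub b T w : (w \in sub b T) = (b :: w \in T).
Proof.
apply/mapP/idP => [[x hx ->]|h]; last by exists (b :: w); rewrite // mem_filter /= eqxx.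
move: hx; rewrite mem_filter; case: x => [|c x] //= /andP[/eqP[->] h].
exact: h.
Qed.

Lemma exists_bt (T : seq word) : [::] \in T ->
  (forall x p, x \in T -> prefix p x -> p \in T) ->
  (forall x, x \in T -> (rcons x false \in T) = (rcons x true \in T)) ->
  exists t, forall w, (w \in T) = inb t w.
Proof.
move=> h0 hp hc; have [k hk] : exists k, size T <= k by exists (size T).
elim: k T hk h0 hp hc => [|k IH] T hk h0 hp hc.
  by move: h0 hk; clear; case: T => [|x s]; rewrite ?in_nil.
case: (boolP ([:: false] \in T)) => hf.
- have ht : [:: true] \in T by rewrite -(hc [::] h0).
  have hs : forall b, size (sub b T) <= k.
    move=> b; rewrite size_map -ltnS; apply: leq_trans hk.
    rewrite size_filter -(count_predC (fun x : word => ohead x == Some b) T).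
    have hh : 0 < count (predC (fun x : word => ohead x == Some b)) T.
      by rewrite -has_count; apply/hasP; exists [::].
    by rewrite -[X in X < _]addn0 ltn_add2l.
  have hsub : forall b, [:: b] \in T -> exists t, forall w, (w \in sub b T) = inb t w.
    move=> b hb; apply: IH => //; first by rewrite mem_sub.
      by move=> x p; rewrite !mem_sub => hx hpx; apply: hp hx _; rewrite /= eqxx.
    by move=> x; rewrite !mem_sub => hx; rewrite -!rcons_cons hc.
  have [tl htl] := hsub false hf; have [tr htr] := hsub true ht.
  exists (Nd tl tr) => -[|b w] //=; rewrite ?h0 //.
  by case: b; rewrite -?htl -?htr mem_sub.
- exists Lf => -[|b w] //=; rewrite ?h0 //.
  apply/negP => hw; have := hp _ [:: b] hw; rewrite /= eqxx prefix0s => /(_ isT).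
  have := hc [::] h0; rewrite /= (negbTE hf) => hft hb.
  move: hb hf hw; case: b => hb; rewrite ?hb //; by rewrite -hft in hb.
Qed.

Lemma sort_eq (s1 s2 : seq word) : uniq s1 -> sorted lexlt s2 -> s1 =i s2 ->
  sort lexle s1 = s2.
Proof.
move=> u1 s2s e.
apply: (sorted_eq lexle_trans lexle_anti).
- exact: sort_sorted lexle_total _.
- by apply: sub_sorted s2s => x y h; rewrite /lexle h orbT.
rewrite perm_sort; apply: uniq_perm => //.
apply: sorted_uniq s2s; [exact: lexlt_trans| by move=> x; rewrite lexlt_irr].
Qed.

Lemma leaves_eq (T : seq word) t : uniq T -> (forall w, (w \in T) = inb t w) ->
  leaves T = lvs t.
Proof.
move=> u hT; apply: sort_eq; first exact: filter_uniq.
  exact: sorted_lvs.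
by move=> x; rewrite mem_filter mem_lvs !hT andbC.
Qed.

Lemma nodes_eq (T : seq word) t : uniq T -> (forall w, (w \in T) = inb t w) ->
  nodes T = nds t.
Proof.
move=> u hT; apply: sort_eq; first exact: filter_uniq.
  exact: sorted_nds.
by move=> x; rewrite mem_filter mem_nds !hT andbC.
Qed.

Lemma iota_eq (L R : seq word) tL tR : uniq L -> uniq R ->
  (forall w, (w \in L) = inb tL w) -> (forall w, (w \in R) = inb tR w) ->
  forall w, Defs.iota L R w = unpos tR (pos tL w).
Proof.
move=> uL uR hL hR w; rewrite /Defs.iota (leaves_eq uL hL) (leaves_eq uR hR)
  (nodes_eq uL hL) (nodes_eq uR hR).
case: (boolP (w \in nds tL)) => h.
  have hi : index w (nds tL) < size (nds tL) by rewrite index_mem.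
  have -> : pos tL w = (index w (nds tL), None).
    rewrite -{1}(nth_index [::] h); apply: (pos_unpos (k := (_, None))).
    change ((index w (nds tL)).+1 < nl tL); move: hi; rewrite size_nds; have := nl_gt0 tL; mylia.
  by [].
have hv := pos_valid tL w; have hu := unpos_pos tL w.
case e: (pos tL w) hv hu => [j [s|]]; rewrite /valid /unpos /= => hv hu.
  rewrite (filter_lvs e) index_uniq ?uniq_lvs //.
  by rewrite -hu drop_size_cat.
by case/negP: h; rewrite -hu mem_nth // size_nds; mylia.
Qed.

Lemma tree_of (T : seq word) : is_tree T -> exists t, forall w, (w \in T) = inb t w.
Proof. by case=> _ h0 hp hc; apply: exists_bt. Qed.

Lemma part1 (L R : seq word) (w1 w2 : word) : thompson_pair L R ->
  lexlt w1 w2 -> lexlt (Defs.iota L R w1) (Defs.iota L R w2).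
Proof.
case=> hL hR hs.
have [tL htL] := tree_of hL; have [tR htR] := tree_of hR.
have uL : uniq L by case: hL. have uR : uniq R by case: hR.
rewrite (leaves_eq uL htL) (leaves_eq uR htR) in hs.
move=> h; rewrite !(iota_eq uL uR htL htR).
have vv : forall w, valid tR (pos tL w).
  by move=> w; have := pos_valid tL w; rewrite /valid /nl hs.
by apply: unpos_mono; rewrite ?vv //; apply: pos_mono.
Qed.

Definition mid (m : bool) : seq word := if m then [:: [::]] else [::].

Lemma decomp_eq (xs : seq word) : sorted lexlt xs -> exists xs0 xs1 (m : bool),
  xs = map (cons false) xs0 ++ mid m ++ map (cons true) xs1.
Proof.
elim: xs => [|x xs IH] hs; first by exists [::], [::], false.
have hall : all (lexlt x) xs by apply: order_path_min hs; exact: lexlt_trans.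
have [xs0 [xs1 [m e]]] := IH (path_sorted hs).
case: x {hs IH} hall => [|[] x'] hall.
- have h0 : xs0 = [::].
    case: xs0 e => // y ys e; have := allP hall (false :: y).
    by rewrite e mem_cat inE eqxx => /(_ isT).
  have hm : m = false.
    case: m e => // e; have := allP hall [::]; rewrite e mem_cat /= inE eqxx orbT.
    by move=> /(_ isT).
  by exists [::], xs1, true; rewrite e h0 hm.
- have h0 : xs0 = [::].
    case: xs0 e => // y ys e; have := allP hall (false :: y).
    by rewrite e mem_cat inE eqxx => /(_ isT).
  have hm : m = false.
    case: m e => // e; have := allP hall [::]; rewrite e mem_cat /= inE eqxx orbT.
    by move=> /(_ isT).
  by exists [::], (x' :: xs1), false; rewrite e h0 hm.
- by exists (x' :: xs0), xs1, m; rewrite e.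
Qed.

Lemma decomp_sorted xs0 xs1 m :
  sorted lexlt (map (cons false) xs0 ++ mid m ++ map (cons true) xs1) ->
  sorted lexlt xs0 /\ sorted lexlt xs1.
Proof.
move=> /cat_sorted2 [h0 /cat_sorted2 [_ h1]].
rewrite sorted_map in h0; rewrite sorted_map in h1.
by split; [apply: sub_sorted h0 | apply: sub_sorted h1] => x y.
Qed.

Definition posof (gs : seq nat) i := sumn (take i.+1 gs) + i.

Lemma posof_catl gsL gsR i : i < size gsL -> posof (gsL ++ gsR) i = posof gsL i.
Proof. by move=> h; rewrite /posof takel_cat. Qed.

Lemma posof_catr gsL gsR j :
  posof (gsL ++ gsR) (size gsL + j) = sumn gsL + size gsL + posof gsR j.
Proof.
rewrite /posof take_cat ltnNge (_ : size gsL <= (size gsL + j).+1) /=; last by mylia.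
rewrite (_ : (size gsL + j).+1 - size gsL = j.+1); last by mylia.
rewrite sumn_cat; mylia.
Qed.

Lemma posof_cons a s j : posof (a :: s) j = a + sumn (take j s) + j.
Proof. by []. Qed.

Fixpoint comb n := if n is n'.+1 then Nd Lf (comb n') else Lf.

Lemma size_nds_comb n : size (nds (comb n)) = n.
Proof. by elim: n => //= n IH; rewrite size_map IH. Qed.

Definition msr (xs : seq word) := sumn (map (fun w => (size w).+1) xs).

Definition good (xs : seq word) B := forall gs, size gs = (size xs).+1 -> all (leq B) gs ->
  exists t, size (nds t) = sumn gs + size xs /\
    forall i, i < size xs -> pos t (nth [::] xs i) = (posof gs i, None).

Lemma good_nil : good [::] 0.
Proof.
move=> [|g [|g' gs]] //= _ _; exists (comb g); rewrite size_nds_comb addn0 addn0.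
by split.
Qed.

Lemma good_mono xs B B' : B <= B' -> good xs B -> good xs B'.
Proof.
move=> hB h gs hs ha; apply: h => //; apply: sub_all ha => x /=.
exact: leq_trans.
Qed.

Lemma nl_nds t : nl t = (size (nds t)).+1.
Proof. by rewrite size_nds; have := nl_gt0 t; mylia. Qed.

Lemma good_true xs0 xs1 B0 B1 : good xs0 B0 -> good xs1 B1 ->
  good (map (cons false) xs0 ++ mid true ++ map (cons true) xs1) (maxn B0 B1).
Proof.
move=> h0 h1 gs; rewrite size_cat /= !size_map => hs ha.
set gsL := take (size xs0).+1 gs; set gsR := drop (size xs0).+1 gs.
have egs : gs = gsL ++ gsR by rewrite cat_take_drop.
have sL : size gsL = (size xs0).+1 by rewrite size_take hs; case: ifP => //; mylia.
have sR : size gsR = (size xs1).+1 by rewrite size_drop hs; mylia.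
have ha0 : all (leq B0) gs by apply: sub_all ha => x; apply: leq_trans; rewrite leq_maxl.
have ha1 : all (leq B1) gs by apply: sub_all ha => x; apply: leq_trans; rewrite leq_maxr.
have /andP[aL _] : all (leq B0) gsL && all (leq B0) gsR by rewrite -all_cat -egs.
have /andP[_ aR] : all (leq B1) gsL && all (leq B1) gsR by rewrite -all_cat -egs.
have [tl [sl pl]] := h0 gsL sL aL.
have [tr [sr pr]] := h1 gsR sR aR.
exists (Nd tl tr); split.
  rewrite (_ : sumn gs = sumn gsL + sumn gsR); last by rewrite {1}egs sumn_cat.
  rewrite /= size_cat /= !size_map sl sr; mylia.
move=> i hi; rewrite nth_cat size_map .
case: ltnP => hi0.
  rewrite (nth_map [::]) //= pl // egs posof_catl // sL; mylia.
case: (eqVneq i (size xs0)) => [ei|ne].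
  rewrite ei subnn /= -size_nds /posof -/gsL sl; congr pair; mylia.
have -> : i - (size xs0) = (i - (size xs0).+1).+1 by mylia.
rewrite /= (nth_map [::]); last by mylia.
have hj : i - (size xs0).+1 < (size xs1) by mylia.
rewrite /= pr // egs (_ : i = size gsL + (i - (size xs0).+1)); last by mylia.
rewrite posof_catr nl_nds sl sL; rewrite addKn; congr pair; mylia.
Qed.

Lemma good_false xs0 xs1 B0 B1 : good xs0 B0 -> good xs1 B1 ->
  good (map (cons false) xs0 ++ mid false ++ map (cons true) xs1) (B0 + B1 + 1).
Proof.
move=> h0 h1 gs; rewrite size_cat /= !size_map => hs ha.
set gsL' := take (size xs0) gs; set g := nth 0 gs (size xs0); set gsR' := drop (size xs0).+1 gs.
have egs : gs = gsL' ++ g :: gsR' by rewrite /g -drop_nth ?cat_take_drop // hs; mylia.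
have sL : size gsL' = (size xs0) by rewrite size_take hs; case: ifP => //; mylia.
have sR : size gsR' = (size xs1) by rewrite size_drop hs; mylia.
have hg : B0 + B1 + 1 <= g by apply: (allP ha); rewrite egs mem_cat inE eqxx orbT.
have /andP[aL /andP[_ aR]] : all (leq (B0 + B1 + 1)) gsL' && all (leq (B0 + B1 + 1)) (g :: gsR').
  by rewrite -all_cat -egs.
have sL2 : size (gsL' ++ [:: B0]) = (size xs0).+1 by rewrite size_cat sL addn1.
have aL2 : all (leq B0) (gsL' ++ [:: B0]).
  rewrite all_cat /= leqnn !andbT; apply: sub_all aL => x; apply: leq_trans; mylia.
have [tl [sl pl]] := h0 _ sL2 aL2.
have sR2 : size ((g - B0 - 1) :: gsR') = (size xs1).+1 by rewrite /= sR.
have aR2 : all (leq B1) ((g - B0 - 1) :: gsR').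
  rewrite /= (_ : B1 <= g - B0 - 1); last by mylia.
  apply: sub_all aR => x; apply: leq_trans; mylia.
have [tr [sr pr]] := h1 _ sR2 aR2.
exists (Nd tl tr); split.
  rewrite (_ : sumn gs = sumn gsL' + (g + sumn gsR')); last by rewrite {1}egs sumn_cat.
  rewrite /= size_cat /= !size_map sl sr sumn_cat /=; mylia.
move=> i hi; rewrite nth_cat size_map .
case: ltnP => hi0.
  rewrite (nth_map [::]) //= pl //.
  by rewrite egs posof_catl ?sL // posof_catl ?sL.
rewrite /= (nth_map [::]); last by mylia.
have hj : i - (size xs0) < (size xs1) by mylia.
rewrite /= pr // egs (_ : i = size gsL' + (i - (size xs0))); last by mylia.
rewrite posof_catr !posof_cons nl_nds sl sL sumn_cat /= addKn; congr pair; mylia.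
Qed.

Lemma msr_cat s1 s2 : msr (s1 ++ s2) = msr s1 + msr s2.
Proof. by rewrite /msr map_cat sumn_cat. Qed.

Lemma msr_map b s : msr (map (cons b) s) = msr s + size s.
Proof. by elim: s => //= x s; rewrite /msr /= => ->; mylia. Qed.

Lemma good_all xs : sorted lexlt xs -> exists B, good xs B.
Proof.
have [k hk] : exists k, msr xs <= k by exists (msr xs).
elim: k xs hk => [|k IH] xs hk hs.
  by case: xs hk hs => [|x xs] //; exists 0; exact: good_nil.
case: xs hk hs => [|x xs'] hk hs; first by exists 0; exact: good_nil.
have [xs0 [xs1 [m e]]] := decomp_eq hs.
rewrite e in hs hk; have [s0 s1] := decomp_sorted hs.
rewrite !msr_cat !msr_map in hk.
have ne : 0 < size xs0 + m + size xs1.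
  have := congr1 size e; rewrite /= !size_cat !size_map; case: (m) => /=; mylia.
have [B0 g0] : exists B, good xs0 B.
  apply: IH s0; move: hk ne; case: (m) => /=; rewrite /msr /=; mylia.
have [B1 g1] : exists B, good xs1 B.
  apply: IH s1; move: hk ne; case: (m) => /=; rewrite /msr /=; mylia.
rewrite e; case: m {e hk hs ne}.
  by exists (maxn B0 B1); apply: good_true.
by exists (B0 + B1 + 1); apply: good_false.
Qed.
Unset Implicit Arguments.

Theorem lemma3p2 (n : nat) :
  (forall (L R : seq word) (x : n.-tuple word),
      thompson_pair L R -> in_Sigma x -> sorted lexlt (act_tuple L R x)) /\
  (forall x y : n.-tuple word, in_Sigma x -> in_Sigma y ->
      exists L R : seq word, thompson_pair L R /\ act_tuple L R x = y).
Proof.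
split.
  move=> L R x hp hx; rewrite /act_tuple.
  have h : {homo Defs.iota L R : a b / lexlt a b} by move=> a b; exact: part1 hp.
  rewrite /in_Sigma in hx; exact: (homo_sorted h _ hx).
move=> x y hx hy.
have [Bx gx] := good_all hx; have [By gy] := good_all hy.
set B := maxn Bx By.
set gs := nseq n.+1 B.
have sg : forall (z : n.-tuple word), size gs = (size z).+1 by move=> z; rewrite size_nseq size_tuple.
have ag : forall b, b <= B -> all (leq b) gs.
  by move=> b hb; rewrite all_nseq hb orbT.
have [tL [sL pL]] := good_mono (leq_maxl Bx By) gx (sg x) (ag _ (leqnn _)).
have [tR [sR pR]] := good_mono (leq_maxr Bx By) gy (sg y) (ag _ (leqnn _)).
have sLR : nl tL = nl tR by rewrite !nl_nds sL sR !size_tuple.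
exists (elems tL), (elems tR); split.
  split; try exact: is_tree_elems.
  rewrite (leaves_eq (uniq_elems tL) (mem_elems tL)).
  by rewrite (leaves_eq (uniq_elems tR) (mem_elems tR)).
rewrite /act_tuple.
apply: (@eq_from_nth _ [::]); first by rewrite size_map !size_tuple.
move=> i; rewrite size_map size_tuple => hi.
rewrite (nth_map [::]) ?size_tuple //.
rewrite (iota_eq (uniq_elems tL) (uniq_elems tR) (mem_elems tL) (mem_elems tR)).
rewrite pL ?size_tuple // -(pR i) ?size_tuple //.
exact: unpos_pos.
Qed.
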